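(* Let $\mathcal{D}$ be a set, $\Sigma$ a finite set and $R\subseteq\mathcal{D}^\Sigma$. Suppose one of the following holds: (i) $R\neq\mathcal{D}^\Sigma$, but $\pi_\Lambda R=\mathcal{D}^\Lambda$ for every non-empty proper subset $\emptyset\subset\Lambda\subset\Sigma$; (ii) $\neg R$ is non-empty, but $\pi_{\{i\}}(\neg R)\neq\mathcal{D}$ for every $i\in\Sigma$. Then $R$ is join irreducible.
   Context: Attributed relation: $R\subseteq\mathcal{D}^\Sigma$, $\Sigma$ finite; $\pi_\Lambda R=\{a|_\Lambda:a\in R\}$; $\neg R=\mathcal{D}^\Sigma\setminus R$. The join of $R_i\subseteq\mathcal{D}^{\Lambda_i}$ is $R_1\Join\dots\Join R_m=\{a\in\mathcal{D}^{\cup_i\Lambda_i}: a|_{\Lambda_i}\in R_i\ \forall i\}$. $R$ is join reducible if $R=R^{\Lambda_1}\Join\dots\Join R^{\Lambda_m}$ for some cover $\Sigma=\Lambda_1\cup\dots\cup\Lambda_m$ with $R^{\Lambda_i}\subseteq\mathcal{D}^{\Lambda_i}$ and $0<|\Lambda_i|<|\Sigma|$; otherwise join irreducible. *)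

(* Defs.v *)
From mathcomp Require Import all_boot all_order.
Unset Printing Implicit Defensive.

Definition tup (D : Type) {S : finType} (L : {set S}) : Type :=
  {x : S | x \in L} -> D.

Definition restr {D : Type} {S : finType} (L : {set S}) (a : S -> D) : tup D L :=
  fun x => a (proj1_sig x).

Definition proj {D : Type} {S : finType} (R : (S -> D) -> Prop) (L : {set S})
  : tup D L -> Prop := fun b => exists a, R a /\ restr L a = b.

Definition negR {D : Type} {S : finType} (R : (S -> D) -> Prop) : (S -> D) -> Prop :=
  fun a => ~ R a.

(* R is join reducible: R = R^{L_1} |><| ... |><| R^{L_m} for a cover
   Sigma = L_1 u ... u L_m with 0 < |L_i| < |Sigma| and R^{L_i} subset of D^{L_i}. *)
Definition join_reducible {D : Type} {S : finType} (R : (S -> D) -> Prop) : Prop :=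
  exists (m : nat) (L : 'I_m -> {set S}) (Rs : forall i : 'I_m, tup D (L i) -> Prop),
    (\bigcup_(i < m) L i = [set: S]) /\
    (forall i, 0 < #|L i| < #|S|) /\
    (forall a : S -> D, R a <-> (forall i, Rs i (restr (L i) a))).

Definition join_irreducible {D : Type} {S : finType} (R : (S -> D) -> Prop) : Prop :=
  ~ join_reducible R.

(* Main.v *)
Require Import Defs.
From mathcomp Require Import all_boot all_order.
From Stdlib Require Import Classical FunctionalExtensionality.

Theorem theorem16 (D : Type) (S : finType) (R : (S -> D) -> Prop) :
  ( ((exists a : S -> D, ~ R a) /\
     (forall L : {set S}, L != set0 -> L != [set: S] ->
        forall b : tup D L, proj R L b))
  \/
    ((exists a : S -> D, negR R a) /\
     (forall i : S, ~ (forall b : tup D [set i], proj (negR R) [set i] b))) ) ->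
  join_irreducible R.
Proof.
move=> H [m [L [Rs [Hcov [Hcard HR]]]]].
case: H => [[[a0 Ha0] Hp] | [[a0 Ha0] Hn]].
- have [j Hj] : exists j, ~ Rs j (restr (L j) a0).
    apply: not_all_ex_not => Hall; apply: Ha0; exact/HR.
  have /andP [c1 c2] := Hcard j.
  have ne0 : L j != set0 by rewrite -card_gt0.
  have neT : L j != [set: S].
    apply/eqP => E; move: c2; by rewrite E cardsT ltnn.
  have [a' [Ra' Ea']] := Hp (L j) ne0 neT (restr (L j) a0).
  apply: Hj; rewrite -Ea'; exact: (proj1 (HR a') Ra' j).
- have [j Hj] : exists j, ~ Rs j (restr (L j) a0).
    apply: not_all_ex_not => Hall; apply: Ha0; exact/HR.
  have /andP [c1 c2] := Hcard j.
  have [k Hk] : exists k, k \notin L j.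
    apply: NNPP => Hno; move: c2.
    have -> : L j = [set: S].
      apply/setP => x; rewrite in_setT; apply: NNPP => Hx.
      apply: Hno; exists x; by apply/negP.
    by rewrite cardsT ltnn.
  have [b Hb] := not_all_ex_not _ _ (Hn k).
  pose a := fun x => if x == k then b (exist _ k (set11 k)) else a0 x.
  have Ra : R a.
    apply: NNPP => nRa; apply: Hb; exists a; split => //.
    apply: functional_extensionality => -[x hx].
    rewrite /restr /a /=.
    have xk : x = k by apply/set1P.
    subst x; rewrite eqxx; congr b; congr exist; exact: bool_irrelevance.
  apply: Hj.
  have -> : restr (L j) a0 = restr (L j) a.
    apply: functional_extensionality => -[x hx].
    rewrite /restr /a /=.
    case: eqP => // xk; subst x; by rewrite hx in Hk.
  exact: (proj1 (HR a) Ra j).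
Qed.
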